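(* Let $q$ be a prime power, $m>4$, $V=\mathbb F_q^m$ with a fixed ordered basis, and $\mu=m-1$. There exists a $(\mu+1)$-dimensional subspace of $\bigwedge^2V$ containing exactly $(q^{\mu}-1)+q^2(q-1)$ decomposable vectors, and the remaining $(q^{\mu}-q^2)(q-1)$ nonzero elements of this subspace are of rank $4$.
   Context: A nonzero $\omega\in\bigwedge^2V$ is decomposable if $\omega=u\wedge v$ for some $u,v\in V$. With respect to the fixed basis $e_1,\dots,e_m$, let $\sigma:\bigwedge^2V\to\{m\times m\text{ skew-symmetric matrices}\}$ be the linear isomorphism with $\sigma(e_r\wedge e_s)=\mathbf e_r\mathbf e_s^t-\mathbf e_s\mathbf e_r^t$ ($r<s$, $\mathbf e_i$ standard column vectors); the rank of $\omega\in\bigwedge^2V$ is the rank of the matrix $\sigma(\omega)$. *)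

(* Defs.v *)
From HB Require Import structures.
From mathcomp Require Import all_boot all_order all_algebra all_field.
Set Implicit Arguments. Unset Strict Implicit. Unset Printing Implicit Defensive.
Import GRing.Theory.
Local Open Scope ring_scope.

(* Index set of the standard basis e_r /\ e_s (r < s) of /\^2 V, V = F^m. *)
Definition I2 (m : nat) := {p : 'I_m * 'I_m | (p.1 < p.2)%N}.

(* /\^2 V, as coordinate vectors w.r.t. the basis e_r /\ e_s, r < s. *)
Definition wedge2 (F : fieldType) (m : nat) := {ffun I2 m -> F^o}.

Definition wedge (F : fieldType) (m : nat) (u v : 'rV[F]_m) : wedge2 F m :=
  [ffun p : I2 m => u 0 (val p).1 * v 0 (val p).2 - u 0 (val p).2 * v 0 (val p).1].

Definition sigma (F : fieldType) (m : nat) (w : wedge2 F m) : 'M[F]_m :=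
  \sum_(p : I2 m) (w p : F) *: (delta_mx (val p).1 (val p).2 - delta_mx (val p).2 (val p).1).

Definition wrank (F : fieldType) (m : nat) (w : wedge2 F m) : nat := \rank (sigma w).

Definition decomposable (F : finFieldType) (m : nat) (w : wedge2 F m) : bool :=
  (w != 0) && [exists u : 'rV[F]_m, exists v : 'rV[F]_m, w == wedge u v].

(* Main.v *)
Require Import Defs.
From HB Require Import structures.
From mathcomp Require Import all_boot all_order all_algebra all_field.
From mathcomp Require Import ring zify.
Import GRing.Theory.
Local Open Scope ring_scope.
Set Implicit Arguments. Unset Strict Implicit. Unset Printing Implicit Defensive.
Section G.
Variables (F : fieldType) (m : nat).

Definition wc (w : wedge2 F m) (i j : 'I_m) : F := oapp (fun p => w p : F) 0 (insub (i, j)).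

Lemma sum_ind (w : wedge2 F m) (x : 'I_m * 'I_m) :
  \sum_(p : I2 m) (w p : F) * ((val p == x)%:R : F) = oapp (fun p => w p : F) 0 (insub x).
Proof.
case: insubP => [u _ ux|nx] /=.
  rewrite (bigD1 u) //= ux eqxx mulr1 big1 ?addr0 // => p pu.
  by rewrite -ux (inj_eq val_inj) (negPf pu) mulr0.
apply: big1 => p _; case: eqP => [px|]; last by rewrite mulr0.
by move: nx; rewrite -px (valP p).
Qed.

Lemma sigmaE (w : wedge2 F m) i j : sigma w i j = wc w i j - wc w j i.
Proof.
rewrite /sigma summxE /wc -!sum_ind -sumrB; apply: eq_bigr => p _.
rewrite !mxE mulrBr; congr (_ * _ - _ * _).
  by case: (val p) => a b /=; rewrite xpair_eqE (eq_sym i) (eq_sym j).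
by case: (val p) => a b /=; rewrite xpair_eqE (eq_sym i) (eq_sym j) andbC.
Qed.

Lemma wc_ge (w : wedge2 F m) (i j : 'I_m) : (j <= i)%N -> wc w i j = 0.
Proof. by move=> h; rewrite /wc insubF //= ltnNge h. Qed.

Lemma wc_val (w : wedge2 F m) p : wc w (val p).1 (val p).2 = w p.
Proof. by rewrite /wc -surjective_pairing valK. Qed.

Lemma wc_wedge (u v : 'rV[F]_m) (i j : 'I_m) : (i < j)%N ->
  wc (wedge u v) i j = u 0 i * v 0 j - u 0 j * v 0 i.
Proof. by move=> h; rewrite /wc insubT /= ffunE. Qed.

Lemma rank_mxsub m1 n1 (f : 'I_m1 -> 'I_m) (g : 'I_n1 -> 'I_m) (A : 'M[F]_m) :
  (\rank (mxsub f g A) <= \rank A)%N.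
Proof.
have -> : mxsub f g A = mxsub f id (mxsub id g A) by apply/matrixP => i j; rewrite !mxE.
rewrite rowsubE; apply: leq_trans (mxrankM_maxr _ _) _.
rewrite -mxrank_tr trmx_mxsub rowsubE -[X in (_ <= X)%N]mxrank_tr.
exact: mxrankM_maxr.
Qed.
End G.
Section S.
Variables (F : finFieldType) (m : nat).

Definition suppset (X : {set I2 m}) : {set wedge2 F m} :=
  [set w : wedge2 F m | [forall p, (p \notin X) ==> (w p == 0)]].

Lemma card_suppset X : #|suppset X| = (#|F| ^ #|X|)%N.
Proof.
have -> : suppset X = [set w in pffun_on (0 : F^o) X predT].
  apply/setP => w; rewrite !inE; apply/forallP/pffun_onP => /=.
    move=> H; split => [|y _]; last by [].
    apply/subsetP => x; rewrite inE => wx; apply/negPn/negP => xX.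
    by move: (H x); rewrite xX /= => /eqP; move/eqP: wx.
  case=> /subsetP H _ p; apply/implyP => pX; apply/negPn/negP => wp.
  by move: (H p); rewrite inE wp => /(_ isT); rewrite (negPf pX).
by rewrite cardsE card_pffun_on.
Qed.

Lemma mem_span_suppset X w :
  (w \in <<enum (suppset X)>>%VS) = (w \in suppset X).
Proof.
apply/idP/idP; last by move=> h; apply: memv_span; rewrite mem_enum.
move/coord_span => ->.
rewrite inE; apply/forallP => p; apply/implyP => pX.
rewrite sum_ffunE; apply/eqP; apply: big1 => i _.
rewrite ffunE.
have : (enum_tuple (suppset X))`_i \in suppset X.
  by rewrite -mem_enum (mem_nth 0) // size_tuple.
by rewrite inE => /forallP/(_ p); rewrite pX /= => /eqP ->; rewrite scaler0.
Qed.
End S.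
Section S2.
Variables (F : finFieldType) (n : nat).
Local Notation m := n.+4.+1.

Definition o0 : 'I_m := @Ordinal m 0 isT.
Definition o1 : 'I_m := @Ordinal m 1 isT.
Definition o2 : 'I_m := @Ordinal m 2 isT.
Definition b01 : I2 m := exist _ (o0, o1) isT.
Definition b02 : I2 m := exist _ (o0, o2) isT.
Definition b12 : I2 m := exist _ (o1, o2) isT.
Definition SA : {set I2 m} := [set p : I2 m | nat_of_ord (val p).1 == 0%N].
Definition SB : {set I2 m} := b01 |: [set b02; b12].
Definition SS : {set I2 m} := b12 |: SA.

Lemma card_SA : #|SA| = n.+4.
Proof.
have inj : {in SA &, injective (fun p : I2 m => (val p).2)}.
  move=> [[a b] h] [[a' b'] h']; rewrite !inE /= => /eqP a0 /eqP a'0 eb.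
  apply: val_inj => /=; congr pair => //; apply: val_inj; by rewrite /= a0 a'0.
rewrite -(card_in_imset inj).
have <- : [set~ o0] = (fun p : I2 m => (val p).2) @: SA.
  apply/setP => j; rewrite !inE; apply/idP/imsetP.
    move=> j0.
    have h : ((o0, j).1 < (o0, j).2)%N by rewrite lt0n.
    by exists (exist _ (o0, j) h); rewrite // inE.
  move=> [[[a b] h]]; rewrite inE /= => /eqP a0 ->.
  apply/eqP => b0; move: h; by rewrite b0 /= a0.
by rewrite cardsC1 card_ord.
Qed.

Lemma card_SB : #|SB| = 3.
Proof.
rewrite /SB cardsU1 cards2 !inE.
by [].
Qed.

Lemma SAB : SA :&: SB = [set b01; b02].
Proof.
apply/setP => p; rewrite !inE.
case: (eqVneq p b01) => [->//|_]; case: (eqVneq p b02) => [->//|_].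
by case: (eqVneq p b12) => [->|]; rewrite ?andbF.
Qed.

Lemma card_SAB : #|SA :&: SB| = 2.
Proof. by rewrite SAB cards2. Qed.

Lemma card_SS : #|SS| = n.+4.+1.
Proof. by rewrite cardsU1 card_SA inE. Qed.

Lemma suppsetS (X Y : {set I2 m}) : X \subset Y -> suppset F X \subset suppset F Y.
Proof.
move/subsetP => XY; apply/subsetP => w; rewrite !inE => /forallP H.
apply/forallP => p; apply/implyP => pY; apply: (implyP (H p)).
by apply: contra pY; apply: XY.
Qed.

Lemma suppsetE (X : {set I2 m}) (w : wedge2 F m) :
  (w \in suppset F X) = [forall p, (p \notin X) ==> (w p == 0)].
Proof. by rewrite inE. Qed.

Lemma supp0 (X : {set I2 m}) (w : wedge2 F m) p :
  w \in suppset F X -> p \notin X -> w p = 0.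
Proof. by rewrite inE => /forallP/(_ p)/implyP H /H/eqP. Qed.

Lemma wc_zero (w : wedge2 F m) (i j : 'I_m) : w \in suppset F SS ->
  i != o0 -> ~~ ((i == o1) && (j == o2)) -> wc w i j = 0.
Proof.
move=> wW i0 n12; have [ji|ij] := leqP j i; first exact: wc_ge.
rewrite /wc insubT /=; apply: (supp0 wW).
rewrite !inE negb_or /=; apply/andP; split; last by [].
apply: contra n12 => /eqP e.
have := congr1 val e => /= [[-> ->]]; by rewrite !eqxx.
Qed.

Definition e0 : 'rV[F]_m := \row_j ((j == o0)%:R).

Lemma decA (w : wedge2 F m) : w \in suppset F SS -> w b12 = 0 ->
  w = wedge e0 (\row_j wc w o0 j).
Proof.
move=> wW c0; apply/ffunP => p; rewrite ffunE !mxE -wc_val.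
case: p => [[i j] h] /=.
have jo : (j == o0) = false by apply/negbTE; apply: contraTneq h => ->.
rewrite jo mul0r subr0.
case: (eqVneq i o0) => [->|i0]; first by rewrite mul1r.
rewrite mul0r; case: (boolP ((i == o1) && (j == o2))) => [/andP[/eqP-> /eqP->]|n12].
  by rewrite (wc_val w b12).
exact: wc_zero.
Qed.

Lemma decB (w : wedge2 F m) : w \in suppset F SB -> w b12 != 0 ->
  w = wedge (\row_j (if j == o0 then w b02 / w b12 else if j == o1 then 1 else 0))
            (\row_j (if j == o0 then - w b01 else if j == o2 then w b12 else 0)).
Proof.
move=> wB c0; apply/ffunP => p; rewrite ffunE !mxE.
case: (eqVneq p b01) => [->|p1] /=; first by ring.
case: (eqVneq p b02) => [->|p2] /=; first by field.
case: (eqVneq p b12) => [->|p3] /=; first by ring.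
rewrite (supp0 wB); last by rewrite !inE negb_or p1 negb_or p2 p3.
move: p1 p2 p3; case: p => [[[i hi] [j hj]] h] /=.
rewrite /eq_op /= /o0 /o1 /o2 /=.
move: h => /= h.
case: j hj h => [|[|[|j]]] hj h; last by rewrite !mul0r !mulr0 subr0.
all: case: i hi h => [|[|[|i]]] hi h //=.
Qed.
Lemma get_j (w : wedge2 F m) : w \in suppset F SS -> w \notin suppset F SB ->
  exists j : 'I_m, (2 < j)%N && (wc w o0 j != 0).
Proof.
move=> wW; rewrite suppsetE => /forallPn [p]; rewrite negb_imply => /andP[pB wp].
have pS : p \in SS.
  by apply/negPn/negP => pS; move: wp; rewrite (supp0 wW pS) eqxx.
have pA : p \in SA.
  move: pS; rewrite !inE; case/orP => // /eqP e; move: pB; by rewrite e !inE eqxx !orbT.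
exists (val p).2; rewrite -(wc_val w p) in wp.
move: pA pB wp; clear pS; case: p => [[[i hi] [j hj]] h]; rewrite !inE /= => /eqP i0.
subst i; rewrite /eq_op /= /o0 /o1 /o2 /=.
have -> : Ordinal hi = o0 by apply: val_inj.
move=> nB wp; rewrite wp andbT.
by case: j hj h nB {wp} => [|[|[|j]]] hj h.
Qed.

Lemma nondec (w : wedge2 F m) : w \in suppset F SS -> w b12 != 0 ->
  (exists j : 'I_m, (2 < j)%N && (wc w o0 j != 0)) -> ~~ decomposable w.
Proof.
move=> wW c0 [j /andP[j2 aj]]; apply/negP => /andP[_ /existsP[u /existsP[v /eqP E]]].
have z1 : wc w o1 j = 0.
  apply: wc_zero => //; apply/negP => /andP[_ /eqP ej]; by rewrite ej in j2.
have z2 : wc w o2 j = 0.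
  apply: wc_zero => //; apply/negP => /andP[/eqP e _]; by [].
have j1 : (o1 < j)%N by apply: ltn_trans j2.
have j0 : (o0 < j)%N by apply: ltn_trans j1.
rewrite -(wc_val w b12) /= in c0.
rewrite E in z1 z2 aj c0.
rewrite !wc_wedge // in z1 z2 aj c0.
have key : (u 0 o0 * v 0 j - u 0 j * v 0 o0) * (u 0 o1 * v 0 o2 - u 0 o2 * v 0 o1) =
   (u 0 o0 * v 0 o2 - u 0 o2 * v 0 o0) * (u 0 o1 * v 0 j - u 0 j * v 0 o1)
 - (u 0 o0 * v 0 o1 - u 0 o1 * v 0 o0) * (u 0 o2 * v 0 j - u 0 j * v 0 o2) by ring.
by move: key; rewrite z1 z2 !mulr0 subrr; apply/eqP; rewrite mulf_neq0.
Qed.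
Lemma wcF (w : wedge2 F m) (i j : 'I_m) : w \in suppset F SS ->
  wc w i j = (i == o0)%:R * wc w o0 j + w b12 * ((i == o1)%:R * (j == o2)%:R).
Proof.
move=> wW; case: (eqVneq i o0) => [->|i0].
  by rewrite (_ : (o0 == o1) = false) // mul0r mulr0 addr0 mul1r.
case: (boolP ((i == o1) && (j == o2))) => [/andP[/eqP-> /eqP->]|n12].
  by rewrite (wc_val w b12) /= mul0r add0r mulr1 mulr1.
rewrite wc_zero // mul0r add0r.
by case: (i == o1) n12; case: (j == o2) => //= _; rewrite !(mulr0, mul0r).
Qed.

Definition Xm (w : wedge2 F m) : 'M[F]_(m, 4) := \matrix_(i < m, k < 4)
  (if (k : nat) == 0%N then (i == o0)%:R else if (k : nat) == 1%N then wc w o0 i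
   else if (k : nat) == 2%N then (i == o1)%:R else (i == o2)%:R).
Definition Ym (w : wedge2 F m) : 'M[F]_(4, m) := \matrix_(k < 4, j < m)
  (if (k : nat) == 0%N then wc w o0 j else if (k : nat) == 1%N then - (j == o0)%:R
   else if (k : nat) == 2%N then w b12 * (j == o2)%:R else - (w b12 * (j == o1)%:R)).

Lemma sigmaXY (w : wedge2 F m) : w \in suppset F SS -> sigma w = Xm w *m Ym w.
Proof.
move=> wW; apply/matrixP => i j; rewrite sigmaE (wcF i j wW) (wcF j i wW) !mxE.
rewrite !big_ord_recl big_ord0 !mxE /=.
move: ((i == o0)%:R) ((j == o0)%:R) ((i == o1)%:R) ((j == o1)%:R) ((i == o2)%:R)
  ((j == o2)%:R) (wc w o0 i) (wc w o0 j) (w b12) => *.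
ring.
Qed.
Lemma sigmaF (w : wedge2 F m) (i j : 'I_m) : w \in suppset F SS ->
  sigma w i j = (i == o0)%:R * wc w o0 j + w b12 * ((i == o1)%:R * (j == o2)%:R) -
  ((j == o0)%:R * wc w o0 i + w b12 * ((j == o1)%:R * (i == o2)%:R)).
Proof. by move=> wW; rewrite sigmaE (wcF i j wW) (wcF j i wW). Qed.

Lemma rank4 (w : wedge2 F m) (j : 'I_m) : w \in suppset F SS -> w b12 != 0 ->
  (2 < j)%N -> wc w o0 j != 0 -> \rank (sigma w) = 4%N.
Proof.
move=> wW c0 j2 ajn; apply/eqP; rewrite eqn_leq; apply/andP; split.
  rewrite (sigmaXY wW); exact: leq_trans (mxrankM_maxr _ _) (rank_leq_row _).
pose f (k : 'I_4) := if (k : nat) == 0%N then o0 else if (k : nat) == 1%N then o1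
  else if (k : nat) == 2%N then o2 else j.
set a1 := wc w o0 o1; set a2 := wc w o0 o2; set aj := wc w o0 j; set c := w b12.
pose K : 'M[F]_4 := \matrix_(k, l) match (k : nat), (l : nat) with
  | 0, 3 => - aj^-1
  | 1, 2 => - c^-1
  | 1, 3 => a2 / (aj * c)
  | 2, 1 => c^-1
  | 2, 3 => - a1 / (aj * c)
  | 3, 0 => aj^-1
  | 3, 1 => - a2 / (aj * c)
  | 3, 2 => a1 / (aj * c)
  | _, _ => 0 end.
have NK : mxsub f f (sigma w) *m K = 1%:M.
  apply/matrixP => k l; rewrite !mxE !big_ord_recl big_ord0 !mxE !sigmaF //.
  have E : forall p (x y : 'I_p), (x == y) = (nat_of_ord x == nat_of_ord y) by [].
  have j0 : (nat_of_ord j == 0%N) = false by case: (nat_of_ord j) j2 => [|[|[|]]].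
  have j1 : (nat_of_ord j == 1%N) = false by case: (nat_of_ord j) j2 => [|[|[|]]].
  have j3 : (nat_of_ord j == 2%N) = false by case: (nat_of_ord j) j2 => [|[|[|]]].
  have a0 : wc w o0 o0 = 0 by rewrite wc_ge.
  case: k => [[|[|[|[|k]]]] hk] //; case: l => [[|[|[|[|l]]]] hl] //;
  rewrite /f !E /= ?j0 ?j1 ?j3 ?a0 -/a1 -/a2 -/aj -/c /=.
  all: try by field; rewrite ?mulf_neq0 // ?ajn ?c0.
rewrite -(mxrank1 F 4) -NK; exact: leq_trans (mxrankM_maxl _ _) (rank_mxsub _ _ _).
Qed.
Definition Wsp : {vspace wedge2 F m} := <<enum (suppset F SS)>>%VS.

Lemma memW w : (w \in Wsp) = (w \in suppset F SS).
Proof. exact: mem_span_suppset. Qed.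

Lemma dimW : \dim Wsp = m.
Proof.
have := card_vspace Wsp.
rewrite (eq_card memW) card_suppset card_SS => /esym.
by move/(expnI (card_finNzRing_gt1 F)).
Qed.

Lemma suppsetI (X Y : {set I2 m}) : suppset F X :&: suppset F Y = suppset F (X :&: Y).
Proof.
apply/setP => w; rewrite inE !suppsetE; apply/andP/forallP.
  case=> /forallP HX /forallP HY p; rewrite inE negb_and.
  apply/implyP => /orP[] h; [exact: (implyP (HX p)) | exact: (implyP (HY p))].
move=> H; split; apply/forallP => p; apply/implyP => h; apply: (implyP (H p));
  by rewrite inE negb_and h ?orbT.
Qed.

Lemma SA_SS : SA \subset SS. Proof. exact: subsetUr. Qed.
Lemma SB_SS : SB \subset SS.
Proof. by apply/subsetP => p; rewrite !inE => /or3P[] /eqP->. Qed.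

Lemma decW (w : wedge2 F m) : w \in suppset F SS ->
  decomposable w = (w != 0) && ((w \in suppset F SA) || (w \in suppset F SB)).
Proof.
move=> wW; rewrite /decomposable.
have b12A : b12 \notin SA by rewrite inE.
case: (eqVneq (w b12) 0) => [c0|c0].
  have wA : w \in suppset F SA.
    rewrite suppsetE; apply/forallP => p; apply/implyP => pA.
    case: (eqVneq p b12) => [->|pb]; first by rewrite c0.
    move: pA; rewrite !inE => pA; apply/eqP; apply: (supp0 wW); by rewrite !inE negb_or pb.
  rewrite wA /=; case: (w != 0) => //=.
  by apply/existsP; exists e0; apply/existsP; eexists; apply/eqP; apply: decA.
have wA : w \notin suppset F SA.
  by apply/negP => /supp0 /(_ b12A) /eqP; rewrite (negPf c0).
rewrite (negPf wA) /=.
case: (boolP (w \in suppset F SB)) => wB.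
  case: (w != 0) => //=.
  by apply/existsP; eexists; apply/existsP; eexists; apply/eqP; apply: decB.
by rewrite andbF; apply/negbTE/nondec => //; apply: get_j.
Qed.
End S2.

Unset Implicit Arguments.

Theorem lemma6p5 (F : finFieldType) (q m : nat) :
  #|F| = q -> (4 < m)%N ->
  exists W : {vspace wedge2 F m},
    \dim W = m /\
    #|[set w : wedge2 F m | (w \in W) && decomposable w]| =
      ((q ^ (m - 1) - 1) + q ^ 2 * (q - 1))%N /\
    #|[set w : wedge2 F m | [&& w \in W, w != 0 & ~~ decomposable w]]| =
      ((q ^ (m - 1) - q ^ 2) * (q - 1))%N /\
    (forall w : wedge2 F m, w \in W -> w != 0 -> ~~ decomposable w ->
       wrank w = 4%N).
Proof.
move=> hq; case: m => [|[|[|[|[|n]]]]] // _.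
rewrite (_ : (n.+4.+1 - 1 = n.+4)%N) //.
exists (Wsp F n); split; first exact: dimW.
have q1 : (1 < q)%N by rewrite -hq card_finNzRing_gt1.
set A := suppset F (SA n); set B := suppset F (SB n); set S := suppset F (SS n).
have AS : A \subset S by apply: suppsetS; apply: SA_SS.
have BS : B \subset S by apply: suppsetS; apply: SB_SS.
have cA : #|A| = (q ^ n.+4)%N by rewrite card_suppset card_SA hq.
have cB : #|B| = (q ^ 3)%N by rewrite card_suppset card_SB hq.
have cAB : #|A :&: B| = (q ^ 2)%N by rewrite suppsetI card_suppset card_SAB hq.
have cS : #|S| = (q ^ n.+4.+1)%N by rewrite card_suppset card_SS hq.
have cU : (#|A :|: B| + q ^ 2 = q ^ n.+4 + q ^ 3)%N by rewrite -cAB cardsUI cA cB.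
have zA : (0 : wedge2 F n.+4.+1) \in A by rewrite suppsetE; apply/forallP => p; rewrite ffunE eqxx implybT.
have x2 : (q ^ 2 <= q ^ n.+4)%N by rewrite leq_exp2l.
have e3 : (q ^ 3 = q * q ^ 2)%N by rewrite expnS.
have e5 : (q ^ n.+4.+1 = q * q ^ n.+4)%N by rewrite expnS.
have p2 : (1 <= q ^ 2)%N by rewrite expn_gt0 ltnW.
split; last split.
- have -> : [set w : wedge2 F n.+4.+1 | (w \in Wsp F n) && decomposable w] = (A :|: B) :\ (0 : wedge2 F n.+4.+1).
    apply/setP => w; rewrite in_set memW in_setD1 in_setU andbC.
    case: (boolP (w \in S)) => wS /=.
      by rewrite andbT decW.
    rewrite andbF.
    apply/esym/negbTE; rewrite negb_and; apply/orP; right; apply/negP => /orP[] h.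
      by move: wS; rewrite (subsetP AS).
    by move: wS; rewrite (subsetP BS).
  have := cardsD1 (0 : wedge2 F n.+4.+1) (A :|: B); rewrite inE zA /= => h.
  rewrite h in cU; move: cU; set D := #|_ :\ _| => cU.
  rewrite mulnBr muln1 mulnC -e3.
  have y32 : (q ^ 2 <= q ^ 3)%N by rewrite leq_exp2l // ltnW.
  move: cU y32 x2 p2; generalize (q ^ n.+4)%N (q ^ 3)%N (q ^ 2)%N => X Y3 Y2.
  lia.
- have -> : [set w : wedge2 F n.+4.+1 | [&& w \in Wsp F n, w != 0 & ~~ decomposable w]] = S :\: (A :|: B).
    apply/setP => w; rewrite in_set memW in_setD in_setU.
    case: (boolP (w \in S)) => wS; rewrite ?andbT ?andbF //=.
    rewrite decW //.
    case: (eqVneq w 0) => [->|] /=; last by [].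
    by rewrite zA.
  rewrite cardsD (setIidPr _); last by rewrite subUset AS BS.
  rewrite cS.
  have le1 : (q ^ 2 * (q - 1) <= q ^ n.+4 * (q - 1))%N by rewrite leq_mul2r x2 orbT.
  have le2 : (q ^ n.+4 <= q ^ n.+4.+1)%N by rewrite leq_exp2l // ltnW.
  have y32 : (q ^ 2 <= q ^ 3)%N by rewrite leq_exp2l // ltnW.
  rewrite mulnBl; rewrite !mulnBr !muln1 (mulnC (q ^ 2)%N) (mulnC (q ^ n.+4)%N) -e3 -e5 in le1 *.
  move: cU le1 le2 y32 x2; set U := #|A :|: B|.
  generalize (q ^ n.+4.+1)%N (q ^ n.+4)%N (q ^ 3)%N (q ^ 2)%N => X5 X Y3 Y2.
  lia.
- move=> w; rewrite memW => wS w0 nd.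
  rewrite decW // w0 /= negb_or in nd; case/andP: nd => nA nB.
  have c0 : w (b12 n) != 0.
    apply: contra nA => /eqP c0; rewrite suppsetE; apply/forallP => p; apply/implyP => pA.
    case: (eqVneq p (b12 n)) => [->|pb]; first by rewrite c0.
    move: pA; rewrite !inE => pA; apply/eqP; apply: (supp0 wS); by rewrite !inE negb_or pb.
  have [j /andP[j2 aj]] := get_j wS nB.
  exact: rank4 wS c0 j2 aj.
Qed.
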